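(* Let $L\in(\Sigma^4_{2,8})^\star$ and $F=\langle L,q(a,b,c)^4\rangle\in\mathbb{R}[a,b,c]_4$, and suppose that the set $\mathcal{V}(F)(\mathbb{R})\subset\mathbb{P}^2(\mathbb{R})$ of real zeros of $F$ is finite. Then $|\mathcal{V}(F)(\mathbb{R})|\le3$. Equivalently: every ternary quartic $F$ lying in $\partial\Sigma^2_{3,4}\cap U$ with only finitely many real projective zeros has at most $3$ real zeros.
   Context: Apolarity pairing on $\mathbb{R}[x,y]$: $\langle x^{\alpha_1}y^{\alpha_2},x^{\beta_1}y^{\beta_2}\rangle=\frac{\beta_1!\beta_2!}{\alpha_1!\alpha_2!}x^{\beta_1-\alpha_1}y^{\beta_2-\alpha_2}$ if $\alpha_i\le\beta_i$, and $0$ otherwise, extended bilinearly. $\Sigma^4_{2,8}\subset\mathbb{R}[x,y]_8$ is the cone of finite sums of fourth powers of real binary quadratic forms and $(\Sigma^4_{2,8})^\star=\{L\in\mathbb{R}[x,y]_8:\langle L,q^4\rangle\ge0\ \forall q\in\mathbb{R}[x,y]_2\}$. With variables $a,b,c$, $q(a,b,c)=ax^2+bxy+cy^2$ and $\langle L,q(a,b,c)^4\rangle\in\mathbb{R}[a,b,c]_4$ is computed in $x,y$ treating $a,b,c$ as scalars. $U\subset\mathbb{R}[a,b,c]_4$ is the $9$-dimensional subspace $\{\langle L,q(a,b,c)^4\rangle: L\in\mathbb{R}[x,y]_8\}$ (equivalently the apolar orthogonal complement of the degree-4 part of the ideal $(b^2-ac)$); $\Sigma^2_{3,4}$ is the cone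 of nonnegative (equivalently, sums of squares) ternary quartics, and $\partial\Sigma^2_{3,4}$ its boundary. Under $L\mapsto\langle L,q(a,b,c)^4\rangle$, $(\Sigma^4_{2,8})^\star$ corresponds to $\Sigma^2_{3,4}\cap U$. *)

(* Defs.v *)
From HB Require Import structures.
From mathcomp Require Import all_boot all_order all_algebra.
From mathcomp Require Import reals.
Set Implicit Arguments. Unset Strict Implicit. Unset Printing Implicit Defensive.
Import Order.TTheory GRing.Theory Num.Theory.
Local Open Scope ring_scope.

(* A real binary form of degree d in x,y is encoded by its coefficient
   function f : 'I_d.+1 -> R, where f i is the coefficient of x^i y^(d-i). *)

(* Apolarity pairing of two binary forms of the same degree d:
   <x^i y^(d-i), x^j y^(d-j)> = j!(d-j)!/(i!(d-i)!) * x^(j-i) y^((d-j)-(d-i))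
   if i <= j and d-i <= d-j, and 0 otherwise; since both have degree d the
   resulting monomial is the constant 1 when nonzero. *)
Definition apolar {R : realType} (d : nat) (f g : 'I_d.+1 -> R) : R :=
  \sum_(i < d.+1) \sum_(j < d.+1)
    f i * g j *
    (if (i <= j)%N && (d - i <= d - j)%N
     then ((j`! * (d - j)`!)%:R / (i`! * (d - i)`!)%:R) else 0).

(* Coefficients of q(a,b,c)^4 = (a x^2 + b x y + c y^2)^4, a binary octic:
   coefficient of x^i y^(8-i) is the coefficient of X^i of the
   dehomogenization (y = 1). *)
Definition qpow4 {R : realType} (a b c : R) : 'I_9 -> R :=
  fun i => ((a *: 'X^2 + b *: 'X + c%:P : {poly R}) ^+ 4)`_i.

Definition Fq {R : realType} (L : 'I_9 -> R) (a b c : R) : R :=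
  @apolar R 8 L (qpow4 a b c).

Definition in_dual_cone {R : realType} (L : 'I_9 -> R) : Prop :=
  forall a b c : R, 0 <= Fq L a b c.

Definition proj_eq {R : realType} (v w : R * R * R) : Prop :=
  exists t : R, t != 0 /\ v = (t * w.1.1, t * w.1.2, t * w.2).

Definition nonzero3 {R : realType} (v : R * R * R) : Prop :=
  v <> (0, 0, 0).

Definition real_zero {R : realType} (L : 'I_9 -> R) (v : R * R * R) : Prop :=
  nonzero3 v /\ Fq L v.1.1 v.1.2 v.2 = 0.

Definition zeros_covered_by {R : realType} (L : 'I_9 -> R) (s : seq (R * R * R)) : Prop :=
  forall v, real_zero L v -> exists2 w, w \in s & proj_eq v w.

(* Main.v *)
Require Import Defs.
From HB Require Import structures.
From mathcomp Require Import all_boot all_order all_algebra.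
From mathcomp Require Import reals.
From mathcomp Require Import ring lra zify.
From Stdlib Require Import Classical.
Import Order.TTheory GRing.Theory Num.Theory.
Local Open Scope ring_scope.
Section S.
Variable R : realType.
Lemma U1 (b0 c0 d0 f0 : R) : (forall e : R, 0 <= b0 * e + c0 * e ^+ 2 + d0 * e ^+ 3 + f0 * e ^+ 4) -> b0 = 0.
Proof.
move=> H.
have key : forall b c d f : R, 0 < b -> (forall e : R, 0 <= b * e + c * e ^+ 2 + d * e ^+ 3 + f * e ^+ 4) -> False.
  move=> {H} b c d f bp H.
  pose K := 1 + b + `|c| + `|d| + `|f|.
  have K1 : 1 <= K by rewrite /K; have := normr_ge0 c; have := normr_ge0 d; have := normr_ge0 f; lra.
  pose e := b / (2 * K).
  have e0 : 0 < e by rewrite /e divr_gt0 //; lra.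
  have eK : e * (2 * K) = b by rewrite /e mulfVK //; lra.
  have bK : b <= K by rewrite /K; have := normr_ge0 c; have := normr_ge0 d; have := normr_ge0 f; lra.
  have e1 : e <= 1 / 2.
    have : (1 / 2 - e) * (2 * K) = K - b by rewrite mulrBl eK; field.
    nra.
  have H1 := H (- e).
  have hc := ler_norm c; have hd := ler_norm d; have hf := ler_norm f.
  have hc' := ler_norm (- c); have hd' := ler_norm (-d); have hf' := ler_norm (-f).
  rewrite !normrN in hc' hd' hf'.
  have : c * e - d * e ^+ 2 + f * e ^+ 3 <= (`|c| + `|d| + `|f|) * e.
    have e2 : e ^+ 2 <= e by nra.
    have e3 : e ^+ 3 <= e by nra.
    have t1 : c * e <= `|c| * e by nra.
    have t2 : - d * e ^+ 2 <= `|d| * e.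
      have : - d * e ^+ 2 <= `|d| * e ^+ 2 by nra.
      have := normr_ge0 d; nra.
    have t3 : f * e ^+ 3 <= `|f| * e.
      have e3p : 0 <= e ^+ 3 by rewrite exprn_ge0 // ltW.
      have : f * e ^+ 3 <= `|f| * e ^+ 3 by nra.
      have := normr_ge0 f; nra.
    lra.
  move=> hb.
  have H2 : 0 <= e * (- b + (c * e - d * e ^+ 2 + f * e ^+ 3)).
    move: H1; congr (_ <= _); ring.
  have H3 : 0 <= - b + (c * e - d * e ^+ 2 + f * e ^+ 3).
    by rewrite -(pmulr_rge0 _ e0).
  have SK : `|c| + `|d| + `|f| <= K by rewrite /K; lra.
  nra.
have [->//|bn] := eqVneq b0 0.
case: (ltrgtP b0 0) => hb; last by move: bn; rewrite hb eqxx.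
  exfalso; apply: (key (- b0) c0 (- d0) f0); first lra.
  move=> e; have := H (- e); congr (_ <= _); ring.
by exfalso; exact: (key b0 c0 d0 f0 hb H).
Qed.
Lemma U2 (a b c : R) : (forall w : R, 0 <= a * w ^+ 2 + b * w + c) -> 0 <= a.
Proof.
move=> H; rewrite leNgt; apply/negP => a0.
have H2 : forall w, 0 <= a * w ^+ 2 + c.
  move=> w; have := H w; have := H (- w); lra.
pose w := (`|c| + 1) / (- a) + 1.
have hw : (w - 1) * (- a) = `|c| + 1 by rewrite /w addrK mulfVK //; lra.
have w1 : 1 <= w.
  have q : 0 <= (`|c| + 1) / (- a).
    rewrite divr_ge0 //; last lra.
    have := normr_ge0 c; lra.
  rewrite /w; lra.
have h1 : a * w ^+ 2 <= a * w.
  have : 0 <= (- a) * (w * (w - 1)) by apply: mulr_ge0; nra.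
  move=> h; rewrite -subr_ge0; move: h; congr (_ <= _); ring.
have := H2 w; have := ler_norm c; nra.
Qed.
End S.
Section S.
Variable R : realType.

Lemma degen1 (A B C p q r x y z : R) : 0 < B -> 0 < C -> A = B + C ->
  C * q + B * r + (A-B-C) * z = 0 ->
  C * p + A * r + (B-A-C) * y = 0 ->
  B * p + A * q + (C-A-B) * x = 0 ->
  (C-A-B) * r + 4%:R * C * x + 2%:R * (A-B-C) * y + 2%:R * (B-A-C) * z = 0 ->
  (B-A-C) * q + 2%:R * (A-B-C) * x + 4%:R * B * y + 2%:R * (C-A-B) * z = 0 ->
  (A-B-C) * p + 2%:R * (B-A-C) * x + 2%:R * (C-A-B) * y + 4%:R * A * z = 0 ->
  p - x - y = 0 /\ x - q - z = 0 /\ y - z - r = 0.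
Proof.
move=> hB hC hA e1 e2 e3 e4 e5 e6.
have er : 3%:R * B * (B+C) * r = B * (C * p + A * r + (B-A-C) * y) - C * (B * p + A * q + (C-A-B) * x)
   - B/2%:R * ((C-A-B) * r + 4%:R * C * x + 2%:R * (A-B-C) * y + 2%:R * (B-A-C) * z)
   + C/2%:R * ((B-A-C) * q + 2%:R * (A-B-C) * x + 4%:R * B * y + 2%:R * (C-A-B) * z)
   + (B + 2%:R * C) * (C * q + B * r + (A-B-C) * z) by rewrite hA; field.
rewrite e1 e2 e3 e4 e5 !mulr0 !subr0 !addr0 in er.
have r0 : r = 0.
  move: er => /eqP; rewrite !mulf_eq0 => /orP[/orP[/orP[]|]|/eqP//].
  - by rewrite pnatr_eq0.
  - by move=> /eqP B0; move: hB; rewrite B0 ltxx.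
  - by move=> /eqP h; exfalso; lra.
have q0 : q = 0.
  have : C * q = 0 by move: e1; rewrite r0 hA => <-; ring.
  by move=> /eqP; rewrite mulf_eq0 => /orP[/eqP h'|/eqP //]; move: hC; rewrite h' ltxx.
subst r q.
have xz : x = z.
  have : 4%:R * C * (x - z) = 0 by rewrite -e4 hA; ring.
  move=> /eqP; rewrite !mulf_eq0 pnatr_eq0 /= => /orP[/eqP h|]; first by move: hC; rewrite h ltxx.
  by rewrite subr_eq0 => /eqP.
have yz : y = z.
  have : 4%:R * B * (y - z) = 0 by rewrite -e5 hA; ring.
  move=> /eqP; rewrite !mulf_eq0 pnatr_eq0 /= => /orP[/eqP h|]; first by move: hB; rewrite h ltxx.
  by rewrite subr_eq0 => /eqP.
subst x y.
have pz : p = 2%:R * z.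
  have : C * (p - 2%:R * z) = 0 by rewrite -e2 hA; ring.
  move=> /eqP; rewrite mulf_eq0 => /orP[/eqP h|]; first by move: hC; rewrite h ltxx.
  by rewrite subr_eq0 => /eqP.
subst p; split; [ring|split; ring].
Qed.

Lemma alg (A B C p q r x y z : R) : 0 < A -> 0 < B -> 0 < C ->
  0 <= 2%:R * (A * B+B * C+C * A) - A^+2 - B^+2 - C^+2 ->
  C * q + B * r + (A-B-C) * z = 0 ->
  C * p + A * r + (B-A-C) * y = 0 ->
  B * p + A * q + (C-A-B) * x = 0 ->
  (C-A-B) * r + 4%:R * C * x + 2%:R * (A-B-C) * y + 2%:R * (B-A-C) * z = 0 ->
  (B-A-C) * q + 2%:R * (A-B-C) * x + 4%:R * B * y + 2%:R * (C-A-B) * z = 0 ->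
  (A-B-C) * p + 2%:R * (B-A-C) * x + 2%:R * (C-A-B) * y + 4%:R * A * z = 0 ->
  exists k1 k2 k3 : R, (k1 != 0 \/ k2 != 0 \/ k3 != 0) /\
    p * k1 + x * k2 + y * k3 = 0 /\ x * k1 + q * k2 + z * k3 = 0 /\ y * k1 + z * k2 + r * k3 = 0.
Proof.
move=> hA hB hC hD e1 e2 e3 e4 e5 e6.
have [d1|d1] := eqVneq (A - B - C) 0.
  have hA' : A = B + C by lra.
  have [h1 [h2 h3]] := degen1 A B C p q r x y z hB hC hA' e1 e2 e3 e4 e5 e6.
  exists 1, (-1), (-1); split; first by left; exact: oner_neq0.
  split; [lra|split; lra].
have [d2|d2] := eqVneq (B - A - C) 0.
  have hB' : B = A + C by lra.
  have [h1 [h2 h3]] := degen1 B A C q p r x z y hA hC hB'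
    ltac:(lra) ltac:(lra) ltac:(lra) ltac:(lra) ltac:(lra) ltac:(lra).
  exists (-1), 1, (-1); split; first by right; left; exact: oner_neq0.
  split; [lra|split; lra].
have [d3|d3] := eqVneq (C - A - B) 0.
  have hC' : C = B + A by lra.
  have [h1 [h2 h3]] := degen1 C B A r q p z y x hB hA hC'
    ltac:(lra) ltac:(lra) ltac:(lra) ltac:(lra) ltac:(lra) ltac:(lra).
  exists (-1), (-1), 1; split; first by right; right; exact: oner_neq0.
  split; [lra|split; lra].
pose DET := (A - B - C) * (B - A - C) * (C - A - B) *
  (- (A + B + C) ^+ 3 + 4%:R * (A + B + C) * (A * B + B * C + C * A) + 40%:R * A * B * C).
have hDET : DET != 0.
  rewrite /DET !mulf_neq0 //.
  have : 0 < (A + B + C) * (2%:R * (A * B + B * C + C * A) - A ^+ 2 - B ^+ 2 - C ^+ 2) + 40%:R * A * B * C.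
    have : 0 < 40%:R * A * B * C by rewrite !mulr_gt0 // ltr0n.
    have : 0 <= (A + B + C) * (2%:R * (A * B + B * C + C * A) - A ^+ 2 - B ^+ 2 - C ^+ 2).
      by apply: mulr_ge0 => //; lra.
    lra.
  move=> h; rewrite gt_eqF //; move: h; congr (_ < _); ring.
have cp : p * DET = (12%:R * A * C^+4 - 48%:R * A * B * C^+3 + 72%:R * A * B^+2 * C^+2 - 48%:R * A * B^+3 * C + 12%:R * A * B^+4 - 16%:R * A^+2 * C^+3 + 16%:R * A^+2 * B * C^+2 + 16%:R * A^+2 * B^+2 * C - 16%:R * A^+2 * B^+3 - 8%:R * A^+3 * C^+2 + 16%:R * A^+3 * B * C - 8%:R * A^+3 * B^+2 + 16%:R * A^+4 * C + 16%:R * A^+4 * B - 4%:R * A^+5) * (C * q + B * r + (A-B-C) * z) + (- 2%:R * C^+5 + 6%:R * B * C^+4 - 4%:R * B^+2 * C^+3 - 4%:R * B^+3 * C^+2 + 6%:R * B^+4 * C - 2%:R * B^+5 + 6%:R * A * C^+4 - 4%:R * A * B^+2 * C^+2 - 16%:R * A * B^+3 * C + 14%:R * A * B^+4 - 4%:R * A^+2 * C^+3 - 4%:R * A^+2 * B * C^+2 + 20%:R * A^+2 * B^+2 * C - 12%:R * A^+2 * B^+3 - 4%:R * A^+3 * C^+2 - 16%:R * A^+3 * B * C - 12%:R * A^+3 * B^+2 + 6%:R * A^+4 * C + 14%:R * A^+4 * B - 2%:R * A^+5) * (C * p + A * r + (B-A-C) * y) + (- 2%:R * C^+5 + 6%:R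 * B * C^+4 - 4%:R * B^+2 * C^+3 - 4%:R * B^+3 * C^+2 + 6%:R * B^+4 * C - 2%:R * B^+5 + 14%:R * A * C^+4 - 16%:R * A * B * C^+3 - 4%:R * A * B^+2 * C^+2 + 6%:R * A * B^+4 - 12%:R * A^+2 * C^+3 + 20%:R * A^+2 * B * C^+2 - 4%:R * A^+2 * B^+2 * C - 4%:R * A^+2 * B^+3 - 12%:R * A^+3 * C^+2 - 16%:R * A^+3 * B * C - 4%:R * A^+3 * B^+2 + 14%:R * A^+4 * C + 6%:R * A^+4 * B - 2%:R * A^+5) * (B * p + A * q + (C-A-B) * x) + (2%:R * A * C^+4 - 16%:R * A * B * C^+3 + 36%:R * A * B^+2 * C^+2 - 32%:R * A * B^+3 * C + 10%:R * A * B^+4 - 4%:R * A^+2 * C^+3 - 4%:R * A^+2 * B * C^+2 + 20%:R * A^+2 * B^+2 * C - 12%:R * A^+2 * B^+3 + 8%:R * A^+3 * B * C - 8%:R * A^+3 * B^+2 + 4%:R * A^+4 * C + 12%:R * A^+4 * B - 2%:R * A^+5) * ((C-A-B) * r + 4%:R * C * x + 2%:R * (A-B-C) * y + 2%:R * (B-A-C) * z) + (10%:R * A * C^+4 - 32%:R * A * B * C^+3 + 36%:R * A * B^+2 * C^+2 - 16%:R * A * B^+3 * C + 2%:R * A * B^+4 - 12%:R * A^+2 * C^+3 + 20%:R * A^+2 * B * C^+2 - 4%:R * A^+2 * B^+2 * C - 4%:R * A^+2 * B^+3 - 8%:R * A^+3 * C^+2 + 8%:R * A^+3 * B * C + 12%:R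 * A^+4 * C + 4%:R * A^+4 * B - 2%:R * A^+5) * ((B-A-C) * q + 2%:R * (A-B-C) * x + 4%:R * B * y + 2%:R * (C-A-B) * z) + (- C^+5 + 3%:R * B * C^+4 - 2%:R * B^+2 * C^+3 - 2%:R * B^+3 * C^+2 + 3%:R * B^+4 * C - B^+5 + 3%:R * A * C^+4 - 28%:R * A * B * C^+3 + 50%:R * A * B^+2 * C^+2 - 28%:R * A * B^+3 * C + 3%:R * A * B^+4 - 2%:R * A^+2 * C^+3 + 2%:R * A^+2 * B * C^+2 + 2%:R * A^+2 * B^+2 * C - 2%:R * A^+2 * B^+3 - 2%:R * A^+3 * C^+2 + 20%:R * A^+3 * B * C - 2%:R * A^+3 * B^+2 + 3%:R * A^+4 * C + 3%:R * A^+4 * B - A^+5) * ((A-B-C) * p + 2%:R * (B-A-C) * x + 2%:R * (C-A-B) * y + 4%:R * A * z) by rewrite /DET; ring.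
have cq : q * DET = (- 2%:R * C^+5 + 6%:R * B * C^+4 - 4%:R * B^+2 * C^+3 - 4%:R * B^+3 * C^+2 + 6%:R * B^+4 * C - 2%:R * B^+5 + 6%:R * A * C^+4 - 4%:R * A * B^+2 * C^+2 - 16%:R * A * B^+3 * C + 14%:R * A * B^+4 - 4%:R * A^+2 * C^+3 - 4%:R * A^+2 * B * C^+2 + 20%:R * A^+2 * B^+2 * C - 12%:R * A^+2 * B^+3 - 4%:R * A^+3 * C^+2 - 16%:R * A^+3 * B * C - 12%:R * A^+3 * B^+2 + 6%:R * A^+4 * C + 14%:R * A^+4 * B - 2%:R * A^+5) * (C * q + B * r + (A-B-C) * z) + (12%:R * B * C^+4 - 16%:R * B^+2 * C^+3 - 8%:R * B^+3 * C^+2 + 16%:R * B^+4 * C - 4%:R * B^+5 - 48%:R * A * B * C^+3 + 16%:R * A * B^+2 * C^+2 + 16%:R * A * B^+3 * C + 16%:R * A * B^+4 + 72%:R * A^+2 * B * C^+2 + 16%:R * A^+2 * B^+2 * C - 8%:R * A^+2 * B^+3 - 48%:R * A^+3 * B * C - 16%:R * A^+3 * B^+2 + 12%:R * A^+4 * B) * (C * p + A * r + (B-A-C) * y) + (- 2%:R * C^+5 + 14%:R * B * C^+4 - 12%:R * B^+2 * C^+3 - 12%:R * B^+3 * C^+2 + 14%:R * B^+4 * C - 2%:R * B^+5 + 6%:R * A * C^+4 - 16%:R * A * B * C^+3 + 20%:R * A * B^+2 * C^+2 - 16%:R * A * B^+3 * C + 6%:R * A * B^+4 - 4%:R * A^+2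 * C^+3 - 4%:R * A^+2 * B * C^+2 - 4%:R * A^+2 * B^+2 * C - 4%:R * A^+2 * B^+3 - 4%:R * A^+3 * C^+2 - 4%:R * A^+3 * B^+2 + 6%:R * A^+4 * C + 6%:R * A^+4 * B - 2%:R * A^+5) * (B * p + A * q + (C-A-B) * x) + (2%:R * B * C^+4 - 4%:R * B^+2 * C^+3 + 4%:R * B^+4 * C - 2%:R * B^+5 - 16%:R * A * B * C^+3 - 4%:R * A * B^+2 * C^+2 + 8%:R * A * B^+3 * C + 12%:R * A * B^+4 + 36%:R * A^+2 * B * C^+2 + 20%:R * A^+2 * B^+2 * C - 8%:R * A^+2 * B^+3 - 32%:R * A^+3 * B * C - 12%:R * A^+3 * B^+2 + 10%:R * A^+4 * B) * ((C-A-B) * r + 4%:R * C * x + 2%:R * (A-B-C) * y + 2%:R * (B-A-C) * z) + (- C^+5 + 3%:R * B * C^+4 - 2%:R * B^+2 * C^+3 - 2%:R * B^+3 * C^+2 + 3%:R * B^+4 * C - B^+5 + 3%:R * A * C^+4 - 28%:R * A * B * C^+3 + 2%:R * A * B^+2 * C^+2 + 20%:R * A * B^+3 * C + 3%:R * A * B^+4 - 2%:R * A^+2 * C^+3 + 50%:R * A^+2 * B * C^+2 + 2%:R * A^+2 * B^+2 * C - 2%:R * A^+2 * B^+3 - 2%:R * A^+3 * C^+2 - 28%:R * A^+3 * B * C - 2%:R * A^+3 * B^+2 + 3%:R * A^+4 * C + 3%:R * A^+4 * B - A^+5) * ((B-A-C) * q + 2%:R * (A-B-C) * x + 4%:R *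 B * y + 2%:R * (C-A-B) * z) + (10%:R * B * C^+4 - 12%:R * B^+2 * C^+3 - 8%:R * B^+3 * C^+2 + 12%:R * B^+4 * C - 2%:R * B^+5 - 32%:R * A * B * C^+3 + 20%:R * A * B^+2 * C^+2 + 8%:R * A * B^+3 * C + 4%:R * A * B^+4 + 36%:R * A^+2 * B * C^+2 - 4%:R * A^+2 * B^+2 * C - 16%:R * A^+3 * B * C - 4%:R * A^+3 * B^+2 + 2%:R * A^+4 * B) * ((A-B-C) * p + 2%:R * (B-A-C) * x + 2%:R * (C-A-B) * y + 4%:R * A * z) by rewrite /DET; ring.
have cr : r * DET = (- 2%:R * C^+5 + 6%:R * B * C^+4 - 4%:R * B^+2 * C^+3 - 4%:R * B^+3 * C^+2 + 6%:R * B^+4 * C - 2%:R * B^+5 + 14%:R * A * C^+4 - 16%:R * A * B * C^+3 - 4%:R * A * B^+2 * C^+2 + 6%:R * A * B^+4 - 12%:R * A^+2 * C^+3 + 20%:R * A^+2 * B * C^+2 - 4%:R * A^+2 * B^+2 * C - 4%:R * A^+2 * B^+3 - 12%:R * A^+3 * C^+2 - 16%:R * A^+3 * B * C - 4%:R * A^+3 * B^+2 + 14%:R * A^+4 * C + 6%:R * A^+4 * B - 2%:R * A^+5) * (C * q + B * r + (A-B-C) * z) + (- 2%:R * C^+5 + 14%:R * B * C^+4 - 12%:R * B^+2 * C^+3 - 12%:R * B^+3 * C^+2 + 14%:R * B^+4 * C - 2%:R * B^+5 + 6%:R * A * C^+4 - 16%:R * A * B * C^+3 + 20%:R * A * B^+2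 * C^+2 - 16%:R * A * B^+3 * C + 6%:R * A * B^+4 - 4%:R * A^+2 * C^+3 - 4%:R * A^+2 * B * C^+2 - 4%:R * A^+2 * B^+2 * C - 4%:R * A^+2 * B^+3 - 4%:R * A^+3 * C^+2 - 4%:R * A^+3 * B^+2 + 6%:R * A^+4 * C + 6%:R * A^+4 * B - 2%:R * A^+5) * (C * p + A * r + (B-A-C) * y) + (- 4%:R * C^+5 + 16%:R * B * C^+4 - 8%:R * B^+2 * C^+3 - 16%:R * B^+3 * C^+2 + 12%:R * B^+4 * C + 16%:R * A * C^+4 + 16%:R * A * B * C^+3 + 16%:R * A * B^+2 * C^+2 - 48%:R * A * B^+3 * C - 8%:R * A^+2 * C^+3 + 16%:R * A^+2 * B * C^+2 + 72%:R * A^+2 * B^+2 * C - 16%:R * A^+3 * C^+2 - 48%:R * A^+3 * B * C + 12%:R * A^+4 * C) * (B * p + A * q + (C-A-B) * x) + (- C^+5 + 3%:R * B * C^+4 - 2%:R * B^+2 * C^+3 - 2%:R * B^+3 * C^+2 + 3%:R * B^+4 * C - B^+5 + 3%:R * A * C^+4 + 20%:R * A * B * C^+3 + 2%:R * A * B^+2 * C^+2 - 28%:R * A * B^+3 * C + 3%:R * A * B^+4 - 2%:R * A^+2 * C^+3 + 2%:R * A^+2 * B * C^+2 + 50%:R * A^+2 * B^+2 * C - 2%:R * A^+2 * B^+3 - 2%:R * A^+3 * C^+2 - 28%:R * A^+3 * B * C - 2%:R * A^+3 * B^+2 + 3%:R * A^+4 * C + 3%:R * A^+4 * B - A^+5)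 * ((C-A-B) * r + 4%:R * C * x + 2%:R * (A-B-C) * y + 2%:R * (B-A-C) * z) + (- 2%:R * C^+5 + 4%:R * B * C^+4 - 4%:R * B^+3 * C^+2 + 2%:R * B^+4 * C + 12%:R * A * C^+4 + 8%:R * A * B * C^+3 - 4%:R * A * B^+2 * C^+2 - 16%:R * A * B^+3 * C - 8%:R * A^+2 * C^+3 + 20%:R * A^+2 * B * C^+2 + 36%:R * A^+2 * B^+2 * C - 12%:R * A^+3 * C^+2 - 32%:R * A^+3 * B * C + 10%:R * A^+4 * C) * ((B-A-C) * q + 2%:R * (A-B-C) * x + 4%:R * B * y + 2%:R * (C-A-B) * z) + (- 2%:R * C^+5 + 12%:R * B * C^+4 - 8%:R * B^+2 * C^+3 - 12%:R * B^+3 * C^+2 + 10%:R * B^+4 * C + 4%:R * A * C^+4 + 8%:R * A * B * C^+3 + 20%:R * A * B^+2 * C^+2 - 32%:R * A * B^+3 * C - 4%:R * A^+2 * B * C^+2 + 36%:R * A^+2 * B^+2 * C - 4%:R * A^+3 * C^+2 - 16%:R * A^+3 * B * C + 2%:R * A^+4 * C) * ((A-B-C) * p + 2%:R * (B-A-C) * x + 2%:R * (C-A-B) * y + 4%:R * A * z) by rewrite /DET; ring.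
have cx : x * DET = (2%:R * A * C^+4 - 16%:R * A * B * C^+3 + 36%:R * A * B^+2 * C^+2 - 32%:R * A * B^+3 * C + 10%:R * A * B^+4 - 4%:R * A^+2 * C^+3 - 4%:R * A^+2 * B * C^+2 + 20%:R * A^+2 * B^+2 * C - 12%:R * A^+2 * B^+3 + 8%:R * A^+3 * B * C - 8%:R * A^+3 * B^+2 + 4%:R * A^+4 * C + 12%:R * A^+4 * B - 2%:R * A^+5) * (C * q + B * r + (A-B-C) * z) + (2%:R * B * C^+4 - 4%:R * B^+2 * C^+3 + 4%:R * B^+4 * C - 2%:R * B^+5 - 16%:R * A * B * C^+3 - 4%:R * A * B^+2 * C^+2 + 8%:R * A * B^+3 * C + 12%:R * A * B^+4 + 36%:R * A^+2 * B * C^+2 + 20%:R * A^+2 * B^+2 * C - 8%:R * A^+2 * B^+3 - 32%:R * A^+3 * B * C - 12%:R * A^+3 * B^+2 + 10%:R * A^+4 * B) * (C * p + A * r + (B-A-C) * y) + (- C^+5 + 3%:R * B * C^+4 - 2%:R * B^+2 * C^+3 - 2%:R * B^+3 * C^+2 + 3%:R * B^+4 * C - B^+5 + 3%:R * A * C^+4 + 20%:R * A * B * C^+3 + 2%:R * A * B^+2 * C^+2 - 28%:R * A * B^+3 * C + 3%:R * A * B^+4 - 2%:R * A^+2 * C^+3 + 2%:R * A^+2 * B * C^+2 + 50%:R * A^+2 * B^+2 * C - 2%:R * A^+2 * B^+3 - 2%:R * A^+3 * C^+2 - 28%:R * A^+3 * B * C - 2%:R * A^+3 * B^+2 + 3%:R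 * A^+4 * C + 3%:R * A^+4 * B - A^+5) * (B * p + A * q + (C-A-B) * x) + (- 4%:R * A * B * C^+3 + 16%:R * A * B^+2 * C^+2 - 20%:R * A * B^+3 * C + 8%:R * A * B^+4 + 16%:R * A^+2 * B * C^+2 + 40%:R * A^+2 * B^+2 * C - 8%:R * A^+2 * B^+3 - 20%:R * A^+3 * B * C - 8%:R * A^+3 * B^+2 + 8%:R * A^+4 * B) * ((C-A-B) * r + 4%:R * C * x + 2%:R * (A-B-C) * y + 2%:R * (B-A-C) * z) + (A * C^+4 - 12%:R * A * B * C^+3 + 22%:R * A * B^+2 * C^+2 - 12%:R * A * B^+3 * C + A * B^+4 - 2%:R * A^+2 * C^+3 + 26%:R * A^+2 * B * C^+2 + 26%:R * A^+2 * B^+2 * C - 2%:R * A^+2 * B^+3 - 16%:R * A^+3 * B * C + 2%:R * A^+4 * C + 2%:R * A^+4 * B - A^+5) * ((B-A-C) * q + 2%:R * (A-B-C) * x + 4%:R * B * y + 2%:R * (C-A-B) * z) + (B * C^+4 - 2%:R * B^+2 * C^+3 + 2%:R * B^+4 * C - B^+5 - 12%:R * A * B * C^+3 + 26%:R * A * B^+2 * C^+2 - 16%:R * A * B^+3 * C + 2%:R * A * B^+4 + 22%:R * A^+2 * B * C^+2 + 26%:R * A^+2 * B^+2 * C - 12%:R * A^+3 * B * C - 2%:R * A^+3 * B^+2 + A^+4 * B) * ((A-B-C) * p + 2%:R * (B-A-C) * x + 2%:R * (C-A-B) * y + 4%:R * A * z) by rewrite /DET; ring.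
have cy : y * DET = (10%:R * A * C^+4 - 32%:R * A * B * C^+3 + 36%:R * A * B^+2 * C^+2 - 16%:R * A * B^+3 * C + 2%:R * A * B^+4 - 12%:R * A^+2 * C^+3 + 20%:R * A^+2 * B * C^+2 - 4%:R * A^+2 * B^+2 * C - 4%:R * A^+2 * B^+3 - 8%:R * A^+3 * C^+2 + 8%:R * A^+3 * B * C + 12%:R * A^+4 * C + 4%:R * A^+4 * B - 2%:R * A^+5) * (C * q + B * r + (A-B-C) * z) + (- C^+5 + 3%:R * B * C^+4 - 2%:R * B^+2 * C^+3 - 2%:R * B^+3 * C^+2 + 3%:R * B^+4 * C - B^+5 + 3%:R * A * C^+4 - 28%:R * A * B * C^+3 + 2%:R * A * B^+2 * C^+2 + 20%:R * A * B^+3 * C + 3%:R * A * B^+4 - 2%:R * A^+2 * C^+3 + 50%:R * A^+2 * B * C^+2 + 2%:R * A^+2 * B^+2 * C - 2%:R * A^+2 * B^+3 - 2%:R * A^+3 * C^+2 - 28%:R * A^+3 * B * C - 2%:R * A^+3 * B^+2 + 3%:R * A^+4 * C + 3%:R * A^+4 * B - A^+5) * (C * p + A * r + (B-A-C) * y) + (- 2%:R * C^+5 + 4%:R * B * C^+4 - 4%:R * B^+3 * C^+2 + 2%:R * B^+4 * C + 12%:R * A * C^+4 + 8%:R * A * B * C^+3 - 4%:R * A * B^+2 * C^+2 - 16%:R * A * B^+3 * C - 8%:R * A^+2 * C^+3 + 20%:R * A^+2 * B * C^+2 + 36%:R * A^+2 * B^+2 * C - 12%:R * A^+3 * C^+2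 - 32%:R * A^+3 * B * C + 10%:R * A^+4 * C) * (B * p + A * q + (C-A-B) * x) + (A * C^+4 - 12%:R * A * B * C^+3 + 22%:R * A * B^+2 * C^+2 - 12%:R * A * B^+3 * C + A * B^+4 - 2%:R * A^+2 * C^+3 + 26%:R * A^+2 * B * C^+2 + 26%:R * A^+2 * B^+2 * C - 2%:R * A^+2 * B^+3 - 16%:R * A^+3 * B * C + 2%:R * A^+4 * C + 2%:R * A^+4 * B - A^+5) * ((C-A-B) * r + 4%:R * C * x + 2%:R * (A-B-C) * y + 2%:R * (B-A-C) * z) + (8%:R * A * C^+4 - 20%:R * A * B * C^+3 + 16%:R * A * B^+2 * C^+2 - 4%:R * A * B^+3 * C - 8%:R * A^+2 * C^+3 + 40%:R * A^+2 * B * C^+2 + 16%:R * A^+2 * B^+2 * C - 8%:R * A^+3 * C^+2 - 20%:R * A^+3 * B * C + 8%:R * A^+4 * C) * ((B-A-C) * q + 2%:R * (A-B-C) * x + 4%:R * B * y + 2%:R * (C-A-B) * z) + (- C^+5 + 2%:R * B * C^+4 - 2%:R * B^+3 * C^+2 + B^+4 * C + 2%:R * A * C^+4 - 16%:R * A * B * C^+3 + 26%:R * A * B^+2 * C^+2 - 12%:R * A * B^+3 * C + 26%:R * A^+2 * B * C^+2 + 22%:R * A^+2 * B^+2 * C - 2%:R * A^+3 * C^+2 - 12%:R * A^+3 * B * C + A^+4 * C) * ((A-B-C) * p + 2%:R * (B-A-C) * x + 2%:R * (C-A-B) * y + 4%:R * A * z) by rewrite /DET; ring.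
have cz : z * DET = (- C^+5 + 3%:R * B * C^+4 - 2%:R * B^+2 * C^+3 - 2%:R * B^+3 * C^+2 + 3%:R * B^+4 * C - B^+5 + 3%:R * A * C^+4 - 28%:R * A * B * C^+3 + 50%:R * A * B^+2 * C^+2 - 28%:R * A * B^+3 * C + 3%:R * A * B^+4 - 2%:R * A^+2 * C^+3 + 2%:R * A^+2 * B * C^+2 + 2%:R * A^+2 * B^+2 * C - 2%:R * A^+2 * B^+3 - 2%:R * A^+3 * C^+2 + 20%:R * A^+3 * B * C - 2%:R * A^+3 * B^+2 + 3%:R * A^+4 * C + 3%:R * A^+4 * B - A^+5) * (C * q + B * r + (A-B-C) * z) + (10%:R * B * C^+4 - 12%:R * B^+2 * C^+3 - 8%:R * B^+3 * C^+2 + 12%:R * B^+4 * C - 2%:R * B^+5 - 32%:R * A * B * C^+3 + 20%:R * A * B^+2 * C^+2 + 8%:R * A * B^+3 * C + 4%:R * A * B^+4 + 36%:R * A^+2 * B * C^+2 - 4%:R * A^+2 * B^+2 * C - 16%:R * A^+3 * B * C - 4%:R * A^+3 * B^+2 + 2%:R * A^+4 * B) * (C * p + A * r + (B-A-C) * y) + (- 2%:R * C^+5 + 12%:R * B * C^+4 - 8%:R * B^+2 * C^+3 - 12%:R * B^+3 * C^+2 + 10%:R * B^+4 * C + 4%:R * A * C^+4 + 8%:R * A * B * C^+3 + 20%:R * A * B^+2 * C^+2 - 32%:R * A * B^+3 * C - 4%:R * A^+2 * B * C^+2 + 36%:R * A^+2 * B^+2 * C - 4%:R * A^+3 * C^+2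 - 16%:R * A^+3 * B * C + 2%:R * A^+4 * C) * (B * p + A * q + (C-A-B) * x) + (B * C^+4 - 2%:R * B^+2 * C^+3 + 2%:R * B^+4 * C - B^+5 - 12%:R * A * B * C^+3 + 26%:R * A * B^+2 * C^+2 - 16%:R * A * B^+3 * C + 2%:R * A * B^+4 + 22%:R * A^+2 * B * C^+2 + 26%:R * A^+2 * B^+2 * C - 12%:R * A^+3 * B * C - 2%:R * A^+3 * B^+2 + A^+4 * B) * ((C-A-B) * r + 4%:R * C * x + 2%:R * (A-B-C) * y + 2%:R * (B-A-C) * z) + (- C^+5 + 2%:R * B * C^+4 - 2%:R * B^+3 * C^+2 + B^+4 * C + 2%:R * A * C^+4 - 16%:R * A * B * C^+3 + 26%:R * A * B^+2 * C^+2 - 12%:R * A * B^+3 * C + 26%:R * A^+2 * B * C^+2 + 22%:R * A^+2 * B^+2 * C - 2%:R * A^+3 * C^+2 - 12%:R * A^+3 * B * C + A^+4 * C) * ((B-A-C) * q + 2%:R * (A-B-C) * x + 4%:R * B * y + 2%:R * (C-A-B) * z) + (8%:R * B * C^+4 - 8%:R * B^+2 * C^+3 - 8%:R * B^+3 * C^+2 + 8%:R * B^+4 * C - 20%:R * A * B * C^+3 + 40%:R * A * B^+2 * C^+2 - 20%:R * A * B^+3 * C + 16%:R * A^+2 * B * C^+2 + 16%:R * A^+2 * B^+2 * C - 4%:R * A^+3 * B * C) * ((A-B-C) * p + 2%:R * (B-A-C) * x + 2%:R * (C-A-B) * y + 4%:R * A * z) by rewrite /DET; ring.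
rewrite e1 e2 e3 e4 e5 e6 !mulr0 !addr0 in cp cq cr cx cy cz.
have z0 : forall t, t * DET = 0 -> t = 0.
  by move=> t /eqP; rewrite mulf_eq0 (negbTE hDET) orbF => /eqP.
move: (z0 _ cp) (z0 _ cq) (z0 _ cr) (z0 _ cx) (z0 _ cy) (z0 _ cz) => -> -> -> -> -> ->.
exists 1, 0, 0; split; first by left; exact: oner_neq0.
split; [ring|split; ring].
Qed.
End S.

Section S.
Variable R : realType.
Variable L : 'I_9 -> R.

Definition ell (p : {poly R}) : R := \sum_(i < 9) L i * p`_i.
Definition qp (v : R * R * R) : {poly R} := v.1.1 *: 'X^2 + v.1.2 *: 'X + v.2%:P.

Lemma Fq_ell a b c : Fq L a b c = ell ((qp (a, b, c)) ^+ 4).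
Proof.
rewrite /Fq /apolar /ell; apply: eq_bigr => i _.
rewrite (bigD1 i) //= big1 ?addr0.
  rewrite !leqnn /= divff ?mulr1 //.
  by rewrite pnatr_eq0 muln_eq0 negb_or -!lt0n !fact_gt0.
move=> j ji; case: ifP => [/andP [h1 h2]|]; last by rewrite mulr0.
exfalso; move: ji; have := ltn_ord i; have := ltn_ord j.
move: h1 h2; rewrite -(inj_eq val_inj) /=; lia.
Qed.

Lemma ellD p q : ell (p + q) = ell p + ell q.
Proof. by rewrite /ell -big_split; apply: eq_bigr => i _; rewrite coefD mulrDr. Qed.
Lemma ellCM c p : ell (c%:P * p) = c * ell p.
Proof. by rewrite /ell mulr_sumr; apply: eq_bigr => i _; rewrite coefCM mulrCA. Qed.
Lemma ell0 : ell 0 = 0.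
Proof. by rewrite /ell big1 // => i _; rewrite coef0 mulr0. Qed.

Lemma ell_bi (p q : {poly R}) (s t : R) :
  ell ((s%:P * p + t%:P * q)^+4) = s^+4 * ell (p^+4) + (4%:R * s^+3 * t) * ell (p^+3 * q)
    + (6%:R * s^+2 * t^+2) * ell (p^+2 * q^+2) + (4%:R * s * t^+3) * ell (q^+3 * p) + t^+4 * ell (q^+4).
Proof.
have E : (s%:P * p + t%:P * q)^+4 = (s^+4)%:P * p^+4 + (4%:R * s^+3 * t)%:P * (p^+3 * q)
    + (6%:R * s^+2 * t^+2)%:P * (p^+2 * q^+2) + (4%:R * s * t^+3)%:P * (q^+3 * p) + (t^+4)%:P * q^+4.
  by rewrite !(polyCD, polyCM, polyC_exp, polyC_natr); ring.
by rewrite E !ellD !ellCM.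
Qed.

Lemma ell_tri (p1 p2 p3 : {poly R}) (s t u : R) :
  ell ((s%:P * p1 + t%:P * p2 + u%:P * p3)^+4) = (s^+4) * ell (p1^+4) + (4%:R * s^+3 * t) * ell (p1^+3 * p2) + (4%:R * s^+3 * u) * ell (p1^+3 * p3) + (6%:R * s^+2 * t^+2) * ell (p1^+2 * p2^+2) + (12%:R * s^+2 * t * u) * ell (p1^+2 * p2 * p3) + (6%:R * s^+2 * u^+2) * ell (p1^+2 * p3^+2) + (4%:R * s * t^+3) * ell (p2^+3 * p1) + (12%:R * s * t^+2 * u) * ell (p2^+2 * p1 * p3) + (12%:R * s * t * u^+2) * ell (p3^+2 * p1 * p2) + (4%:R * s * u^+3) * ell (p3^+3 * p1) + (t^+4) * ell (p2^+4) + (4%:R * t^+3 * u) * ell (p2^+3 * p3) + (6%:R * t^+2 * u^+2) * ell (p2^+2 * p3^+2) + (4%:R * t * u^+3) * ell (p3^+3 * p2) + (u^+4) * ell (p3^+4).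
Proof.
have E : (s%:P * p1 + t%:P * p2 + u%:P * p3)^+4 = (s^+4)%:P * (p1^+4) + (4%:R * s^+3 * t)%:P * (p1^+3 * p2) + (4%:R * s^+3 * u)%:P * (p1^+3 * p3) + (6%:R * s^+2 * t^+2)%:P * (p1^+2 * p2^+2) + (12%:R * s^+2 * t * u)%:P * (p1^+2 * p2 * p3) + (6%:R * s^+2 * u^+2)%:P * (p1^+2 * p3^+2) + (4%:R * s * t^+3)%:P * (p2^+3 * p1) + (12%:R * s * t^+2 * u)%:P * (p2^+2 * p1 * p3) + (12%:R * s * t * u^+2)%:P * (p3^+2 * p1 * p2) + (4%:R * s * u^+3)%:P * (p3^+3 * p1) + (t^+4)%:P * (p2^+4) + (4%:R * t^+3 * u)%:P * (p2^+3 * p3) + (6%:R * t^+2 * u^+2)%:P * (p2^+2 * p3^+2) + (4%:R * t * u^+3)%:P * (p3^+3 * p2) + (u^+4)%:P * (p3^+4).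
  by rewrite !(polyCD, polyCM, polyC_exp, polyC_natr); ring.
by rewrite E !ellD !ellCM.
Qed.

Lemma ell_cube1 (p1 p2 p3 : {poly R}) :
  ell ((p1 + p2 + p3)^+3 * p1) = 1%:R * ell (p3^+3 * p1) + 3%:R * ell (p3^+2 * p1 * p2) + 3%:R * ell (p2^+2 * p1 * p3) + 1%:R * ell (p2^+3 * p1) + 3%:R * ell (p1^+2 * p3^+2) + 6%:R * ell (p1^+2 * p2 * p3) + 3%:R * ell (p1^+2 * p2^+2) + 3%:R * ell (p1^+3 * p3) + 3%:R * ell (p1^+3 * p2) + 1%:R * ell (p1^+4).
Proof.
have E : (p1 + p2 + p3)^+3 * p1 = (1%:R)%:P * (p3^+3 * p1) + (3%:R)%:P * (p3^+2 * p1 * p2) + (3%:R)%:P * (p2^+2 * p1 * p3) + (1%:R)%:P * (p2^+3 * p1) + (3%:R)%:P * (p1^+2 * p3^+2) + (6%:R)%:P * (p1^+2 * p2 * p3) + (3%:R)%:P * (p1^+2 * p2^+2) + (3%:R)%:P * (p1^+3 * p3) + (3%:R)%:P * (p1^+3 * p2) + (1%:R)%:P * (p1^+4).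
  by rewrite !polyC_natr; ring.
by rewrite E !ellD !ellCM.
Qed.

Lemma ell_cube2 (p1 p2 p3 : {poly R}) :
  ell ((p1 + p2 + p3)^+3 * p2) = 1%:R * ell (p3^+3 * p2) + 3%:R * ell (p2^+2 * p3^+2) + 3%:R * ell (p2^+3 * p3) + 1%:R * ell (p2^+4) + 3%:R * ell (p3^+2 * p1 * p2) + 6%:R * ell (p2^+2 * p1 * p3) + 3%:R * ell (p2^+3 * p1) + 3%:R * ell (p1^+2 * p2 * p3) + 3%:R * ell (p1^+2 * p2^+2) + 1%:R * ell (p1^+3 * p2).
Proof.
have E : (p1 + p2 + p3)^+3 * p2 = (1%:R)%:P * (p3^+3 * p2) + (3%:R)%:P * (p2^+2 * p3^+2) + (3%:R)%:P * (p2^+3 * p3) + (1%:R)%:P * (p2^+4) + (3%:R)%:P * (p3^+2 * p1 * p2) + (6%:R)%:P * (p2^+2 * p1 * p3) + (3%:R)%:P * (p2^+3 * p1) + (3%:R)%:P * (p1^+2 * p2 * p3) + (3%:R)%:P * (p1^+2 * p2^+2) + (1%:R)%:P * (p1^+3 * p2).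
  by rewrite !polyC_natr; ring.
by rewrite E !ellD !ellCM.
Qed.

Lemma ell_cube3 (p1 p2 p3 : {poly R}) :
  ell ((p1 + p2 + p3)^+3 * p3) = 1%:R * ell (p3^+4) + 3%:R * ell (p3^+3 * p2) + 3%:R * ell (p2^+2 * p3^+2) + 1%:R * ell (p2^+3 * p3) + 3%:R * ell (p3^+3 * p1) + 6%:R * ell (p3^+2 * p1 * p2) + 3%:R * ell (p2^+2 * p1 * p3) + 3%:R * ell (p1^+2 * p3^+2) + 3%:R * ell (p1^+2 * p2 * p3) + 1%:R * ell (p1^+3 * p3).
Proof.
have E : (p1 + p2 + p3)^+3 * p3 = (1%:R)%:P * (p3^+4) + (3%:R)%:P * (p3^+3 * p2) + (3%:R)%:P * (p2^+2 * p3^+2) + (1%:R)%:P * (p2^+3 * p3) + (3%:R)%:P * (p3^+3 * p1) + (6%:R)%:P * (p3^+2 * p1 * p2) + (3%:R)%:P * (p2^+2 * p1 * p3) + (3%:R)%:P * (p1^+2 * p3^+2) + (3%:R)%:P * (p1^+2 * p2 * p3) + (1%:R)%:P * (p1^+3 * p3).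
  by rewrite !polyC_natr; ring.
by rewrite E !ellD !ellCM.
Qed.

Lemma ell_rel11 (p1 p2 p3 : {poly R}) (n11 n22 n33 n12 n13 n23 : R) :
  ell (p1 * p1 * (n11%:P * p1^+2 + n22%:P * p2^+2 + n33%:P * p3^+2 + (2%:R * n12)%:P * (p1 * p2) + (2%:R * n13)%:P * (p1 * p3) + (2%:R * n23)%:P * (p2 * p3))) = n11 * ell (p1^+4) + n22 * ell (p1^+2 * p2^+2) + n33 * ell (p1^+2 * p3^+2) + (2%:R * n12) * ell (p1^+3 * p2) + (2%:R * n13) * ell (p1^+3 * p3) + (2%:R * n23) * ell (p1^+2 * p2 * p3).
Proof.
have E : p1 * p1 * (n11%:P * p1^+2 + n22%:P * p2^+2 + n33%:P * p3^+2 + (2%:R * n12)%:P * (p1 * p2) + (2%:R * n13)%:P * (p1 * p3) + (2%:R * n23)%:P * (p2 * p3)) = n11%:P * (p1^+4) + n22%:P * (p1^+2 * p2^+2) + n33%:P * (p1^+2 * p3^+2) + (2%:R * n12)%:P * (p1^+3 * p2) + (2%:R * n13)%:P * (p1^+3 * p3) + (2%:R * n23)%:P * (p1^+2 * p2 * p3).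
  by ring.
by rewrite E !ellD !ellCM.
Qed.

Lemma ell_rel22 (p1 p2 p3 : {poly R}) (n11 n22 n33 n12 n13 n23 : R) :
  ell (p2 * p2 * (n11%:P * p1^+2 + n22%:P * p2^+2 + n33%:P * p3^+2 + (2%:R * n12)%:P * (p1 * p2) + (2%:R * n13)%:P * (p1 * p3) + (2%:R * n23)%:P * (p2 * p3))) = n11 * ell (p1^+2 * p2^+2) + n22 * ell (p2^+4) + n33 * ell (p2^+2 * p3^+2) + (2%:R * n12) * ell (p2^+3 * p1) + (2%:R * n13) * ell (p2^+2 * p1 * p3) + (2%:R * n23) * ell (p2^+3 * p3).
Proof.
have E : p2 * p2 * (n11%:P * p1^+2 + n22%:P * p2^+2 + n33%:P * p3^+2 + (2%:R * n12)%:P * (p1 * p2) + (2%:R * n13)%:P * (p1 * p3) + (2%:R * n23)%:P * (p2 * p3)) = n11%:P * (p1^+2 * p2^+2) + n22%:P * (p2^+4) + n33%:P * (p2^+2 * p3^+2) + (2%:R * n12)%:P * (p2^+3 * p1) + (2%:R * n13)%:P * (p2^+2 * p1 * p3) + (2%:R * n23)%:P * (p2^+3 * p3).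
  by ring.
by rewrite E !ellD !ellCM.
Qed.

Lemma ell_rel33 (p1 p2 p3 : {poly R}) (n11 n22 n33 n12 n13 n23 : R) :
  ell (p3 * p3 * (n11%:P * p1^+2 + n22%:P * p2^+2 + n33%:P * p3^+2 + (2%:R * n12)%:P * (p1 * p2) + (2%:R * n13)%:P * (p1 * p3) + (2%:R * n23)%:P * (p2 * p3))) = n11 * ell (p1^+2 * p3^+2) + n22 * ell (p2^+2 * p3^+2) + n33 * ell (p3^+4) + (2%:R * n12) * ell (p3^+2 * p1 * p2) + (2%:R * n13) * ell (p3^+3 * p1) + (2%:R * n23) * ell (p3^+3 * p2).
Proof.
have E : p3 * p3 * (n11%:P * p1^+2 + n22%:P * p2^+2 + n33%:P * p3^+2 + (2%:R * n12)%:P * (p1 * p2) + (2%:R * n13)%:P * (p1 * p3) + (2%:R * n23)%:P * (p2 * p3)) = n11%:P * (p1^+2 * p3^+2) + n22%:P * (p2^+2 * p3^+2) + n33%:P * (p3^+4) + (2%:R * n12)%:P * (p3^+2 * p1 * p2) + (2%:R * n13)%:P * (p3^+3 * p1) + (2%:R * n23)%:P * (p3^+3 * p2).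
  by ring.
by rewrite E !ellD !ellCM.
Qed.

Lemma ell_rel12 (p1 p2 p3 : {poly R}) (n11 n22 n33 n12 n13 n23 : R) :
  ell (p1 * p2 * (n11%:P * p1^+2 + n22%:P * p2^+2 + n33%:P * p3^+2 + (2%:R * n12)%:P * (p1 * p2) + (2%:R * n13)%:P * (p1 * p3) + (2%:R * n23)%:P * (p2 * p3))) = n11 * ell (p1^+3 * p2) + n22 * ell (p2^+3 * p1) + n33 * ell (p3^+2 * p1 * p2) + (2%:R * n12) * ell (p1^+2 * p2^+2) + (2%:R * n13) * ell (p1^+2 * p2 * p3) + (2%:R * n23) * ell (p2^+2 * p1 * p3).
Proof.
have E : p1 * p2 * (n11%:P * p1^+2 + n22%:P * p2^+2 + n33%:P * p3^+2 + (2%:R * n12)%:P * (p1 * p2) + (2%:R * n13)%:P * (p1 * p3) + (2%:R * n23)%:P * (p2 * p3)) = n11%:P * (p1^+3 * p2) + n22%:P * (p2^+3 * p1) + n33%:P * (p3^+2 * p1 * p2) + (2%:R * n12)%:P * (p1^+2 * p2^+2) + (2%:R * n13)%:P * (p1^+2 * p2 * p3) + (2%:R * n23)%:P * (p2^+2 * p1 * p3).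
  by ring.
by rewrite E !ellD !ellCM.
Qed.

Lemma ell_rel13 (p1 p2 p3 : {poly R}) (n11 n22 n33 n12 n13 n23 : R) :
  ell (p1 * p3 * (n11%:P * p1^+2 + n22%:P * p2^+2 + n33%:P * p3^+2 + (2%:R * n12)%:P * (p1 * p2) + (2%:R * n13)%:P * (p1 * p3) + (2%:R * n23)%:P * (p2 * p3))) = n11 * ell (p1^+3 * p3) + n22 * ell (p2^+2 * p1 * p3) + n33 * ell (p3^+3 * p1) + (2%:R * n12) * ell (p1^+2 * p2 * p3) + (2%:R * n13) * ell (p1^+2 * p3^+2) + (2%:R * n23) * ell (p3^+2 * p1 * p2).
Proof.
have E : p1 * p3 * (n11%:P * p1^+2 + n22%:P * p2^+2 + n33%:P * p3^+2 + (2%:R * n12)%:P * (p1 * p2) + (2%:R * n13)%:P * (p1 * p3) + (2%:R * n23)%:P * (p2 * p3)) = n11%:P * (p1^+3 * p3) + n22%:P * (p2^+2 * p1 * p3) + n33%:P * (p3^+3 * p1) + (2%:R * n12)%:P * (p1^+2 * p2 * p3) + (2%:R * n13)%:P * (p1^+2 * p3^+2) + (2%:R * n23)%:P * (p3^+2 * p1 * p2).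
  by ring.
by rewrite E !ellD !ellCM.
Qed.

Lemma ell_rel23 (p1 p2 p3 : {poly R}) (n11 n22 n33 n12 n13 n23 : R) :
  ell (p2 * p3 * (n11%:P * p1^+2 + n22%:P * p2^+2 + n33%:P * p3^+2 + (2%:R * n12)%:P * (p1 * p2) + (2%:R * n13)%:P * (p1 * p3) + (2%:R * n23)%:P * (p2 * p3))) = n11 * ell (p1^+2 * p2 * p3) + n22 * ell (p2^+3 * p3) + n33 * ell (p3^+3 * p2) + (2%:R * n12) * ell (p2^+2 * p1 * p3) + (2%:R * n13) * ell (p3^+2 * p1 * p2) + (2%:R * n23) * ell (p2^+2 * p3^+2).
Proof.
have E : p2 * p3 * (n11%:P * p1^+2 + n22%:P * p2^+2 + n33%:P * p3^+2 + (2%:R * n12)%:P * (p1 * p2) + (2%:R * n13)%:P * (p1 * p3) + (2%:R * n23)%:P * (p2 * p3)) = n11%:P * (p1^+2 * p2 * p3) + n22%:P * (p2^+3 * p3) + n33%:P * (p3^+3 * p2) + (2%:R * n12)%:P * (p2^+2 * p1 * p3) + (2%:R * n13)%:P * (p3^+2 * p1 * p2) + (2%:R * n23)%:P * (p2^+2 * p3^+2).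
  by ring.
by rewrite E !ellD !ellCM.
Qed.

End S.

Section M.
Variable R : realType.
Variable L : 'I_9 -> R.
Local Notation ell := (@ell R L).
Local Notation qp := (@qp R).
Local Notation vec := (R * R * R)%type.

Definition vlin2 (s t : R) (v w : vec) : vec :=
  (s * v.1.1 + t * w.1.1, s * v.1.2 + t * w.1.2, s * v.2 + t * w.2).
Definition vlin3 (s t u : R) (v1 v2 v3 : vec) : vec :=
  (s * v1.1.1 + t * v2.1.1 + u * v3.1.1, s * v1.1.2 + t * v2.1.2 + u * v3.1.2,
   s * v1.2 + t * v2.2 + u * v3.2).

Lemma qp_lin2 s t v w : qp (vlin2 s t v w) = s%:P * qp v + t%:P * qp w.
Proof. by rewrite /qp /= -!mul_polyC !(polyCD, polyCM); ring. Qed.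
Lemma qp_lin3 s t u v1 v2 v3 :
  qp (vlin3 s t u v1 v2 v3) = s%:P * qp v1 + t%:P * qp v2 + u%:P * qp v3.
Proof. by rewrite /qp /= -!mul_polyC !(polyCD, polyCM); ring. Qed.

Hypothesis HL : in_dual_cone L.

Lemma posq v : 0 <= ell (qp v ^+ 4).
Proof. by case: v => [[a b] c]; rewrite -Fq_ell; exact: HL. Qed.

Lemma zero_ell v : real_zero L v -> ell (qp v ^+ 4) = 0.
Proof. by case: v => [[a b] c] [_ h]; rewrite -Fq_ell. Qed.

Lemma ell_zero v : nonzero3 v -> ell (qp v ^+ 4) = 0 -> real_zero L v.
Proof. by case: v => [[a b] c] h1 h2; split => //=; rewrite Fq_ell. Qed.

Lemma FO z w : ell (qp z ^+ 4) = 0 -> ell (qp z ^+ 3 * qp w) = 0.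
Proof.
move=> hz.
have h := @U1 R (4%:R * ell (qp z ^+3 * qp w)) (6%:R * ell (qp z ^+2 * qp w ^+2))
   (4%:R * ell (qp w ^+3 * qp z)) (ell (qp w ^+4)).
have : 4%:R * ell (qp z ^+3 * qp w) = 0.
  apply: h => e; have := posq (vlin2 1 e z w).
  by rewrite qp_lin2 ell_bi hz; congr (_ <= _); ring.
by move/eqP; rewrite mulf_eq0 pnatr_eq0 /= => /eqP.
Qed.

Lemma pair_exp z w s t : ell (qp z ^+ 4) = 0 -> ell (qp w ^+ 4) = 0 ->
  ell ((s%:P * qp z + t%:P * qp w) ^+ 4) = 6%:R * s ^+ 2 * t ^+ 2 * ell (qp z ^+ 2 * qp w ^+ 2).
Proof.
move=> hz hw; rewrite ell_bi hz hw (FO z w hz) (FO w z hw); ring.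
Qed.


Lemma core (p1 p2 p3 : {poly R}) (n11 n22 n33 n12 n13 n23 : R) :
  ell (p1^+4) = 0 -> ell (p2^+4) = 0 -> ell (p3^+4) = 0 ->
  ell (p1^+3 * p2) = 0 -> ell (p1^+3 * p3) = 0 -> ell (p2^+3 * p1) = 0 ->
  ell (p2^+3 * p3) = 0 -> ell (p3^+3 * p1) = 0 -> ell (p3^+3 * p2) = 0 ->
  ell ((p1 + p2 + p3)^+3 * p1) = 0 -> ell ((p1 + p2 + p3)^+3 * p2) = 0 ->
  ell ((p1 + p2 + p3)^+3 * p3) = 0 ->
  (forall s t u, 0 <= ell ((s%:P * p1 + t%:P * p2 + u%:P * p3)^+4)) ->
  0 < ell (p1^+2 * p2^+2) -> 0 < ell (p1^+2 * p3^+2) -> 0 < ell (p2^+2 * p3^+2) ->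
  n11%:P * p1^+2 + n22%:P * p2^+2 + n33%:P * p3^+2 + (2%:R * n12)%:P * (p1 * p2) + (2%:R * n13)%:P * (p1 * p3) + (2%:R * n23)%:P * (p2 * p3) = 0 ->
  exists k1 k2 k3 : R, (k1 != 0 \/ k2 != 0 \/ k3 != 0) /\
    n11 * k1 + n12 * k2 + n13 * k3 = 0 /\ n12 * k1 + n22 * k2 + n23 * k3 = 0 /\
    n13 * k1 + n23 * k2 + n33 * k3 = 0.
Proof.
move=> z1 z2 z3 f12 f13 f21 f23 f31 f32 g1 g2 g3 hpos c12 c13 c23 hrel.
move: g1 g2 g3; rewrite ell_cube1 ell_cube2 ell_cube3 z1 z2 z3 f12 f13 f21 f23 f31 f32 => g1 g2 g3.
have hd1 : ell (p1^+2 * p2 * p3) = (ell (p2^+2 * p3^+2) - ell (p1^+2 * p3^+2) - ell (p1^+2 * p2^+2)) / 2%:R by lra.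
have hd2 : ell (p2^+2 * p1 * p3) = (ell (p1^+2 * p3^+2) - ell (p2^+2 * p3^+2) - ell (p1^+2 * p2^+2)) / 2%:R by lra.
have hd3 : ell (p3^+2 * p1 * p2) = (ell (p1^+2 * p2^+2) - ell (p2^+2 * p3^+2) - ell (p1^+2 * p3^+2)) / 2%:R by lra.
have hX : forall X Y : R, 0 <= 6%:R * ell (p1^+2 * p3^+2) * Y^+2 + 6%:R * ell (p2^+2 * p3^+2) * X^+2
     + 12%:R * X * Y * ell (p3^+2 * p1 * p2).
  move=> X Y.
  apply: (@U2 R _ (12%:R * X * Y * (Y * ell (p1^+2 * p2 * p3) + X * ell (p2^+2 * p1 * p3)))
          (6%:R * ell (p1^+2 * p2^+2) * X^+2 * Y^+2)) => w.
  have := hpos Y X w.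
  rewrite ell_tri z1 z2 z3 f12 f13 f21 f23 f31 f32.
  lra.
have hD : 0 <= 2%:R * (ell (p2^+2 * p3^+2) * ell (p1^+2 * p3^+2) + ell (p1^+2 * p3^+2) * ell (p1^+2 * p2^+2)
    + ell (p1^+2 * p2^+2) * ell (p2^+2 * p3^+2)) - ell (p2^+2 * p3^+2)^+2 - ell (p1^+2 * p3^+2)^+2
    - ell (p1^+2 * p2^+2)^+2.
  have := hX (- 2%:R * ell (p3^+2 * p1 * p2)) (2%:R * ell (p2^+2 * p3^+2)).
  move: c23 hd3; set A := ell (p2^+2 * p3^+2); set B := ell (p1^+2 * p3^+2); set C := ell (p1^+2 * p2^+2).
  set d := ell (p3^+2 * p1 * p2) => hA hd h.
  have h' : 0 <= 24%:R * A * (A * B - d ^+ 2) by move: h; congr (_ <= _); ring.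
  have h'' : 0 <= A * B - d ^+ 2.
    have h24 : 0 < 24%:R * A by rewrite mulr_gt0 // ltr0n.
    by rewrite pmulr_rge0 in h'.
  rewrite hd in h''. lra.
have r11 := ell_rel11 R L p1 p2 p3 n11 n22 n33 n12 n13 n23.
have r22 := ell_rel22 R L p1 p2 p3 n11 n22 n33 n12 n13 n23.
have r33 := ell_rel33 R L p1 p2 p3 n11 n22 n33 n12 n13 n23.
have r12 := ell_rel12 R L p1 p2 p3 n11 n22 n33 n12 n13 n23.
have r13 := ell_rel13 R L p1 p2 p3 n11 n22 n33 n12 n13 n23.
have r23 := ell_rel23 R L p1 p2 p3 n11 n22 n33 n12 n13 n23.
rewrite hrel !mulr0 ell0 z1 z2 z3 f12 f13 f21 f23 f31 f32 hd1 hd2 hd3 in r11 r22 r33 r12 r13 r23.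
move: c12 c13 c23 hD r11 r22 r33 r12 r13 r23.
set A := ell (p2^+2 * p3^+2); set B := ell (p1^+2 * p3^+2); set C := ell (p1^+2 * p2^+2).
move=> c12 c13 c23 hD r11 r22 r33 r12 r13 r23.
have E1 : C * n22 + B * n33 + (A - B - C) * n23 = 0 by lra.
have E2 : C * n11 + A * n33 + (B - A - C) * n13 = 0 by lra.
have E3 : B * n11 + A * n22 + (C - A - B) * n12 = 0 by lra.
have E4 : (C - A - B) * n33 + 4%:R * C * n12 + 2%:R * (A - B - C) * n13 + 2%:R * (B - A - C) * n23 = 0 by lra.
have E5 : (B - A - C) * n22 + 2%:R * (A - B - C) * n12 + 4%:R * B * n13 + 2%:R * (C - A - B) * n23 = 0 by lra.
have E6 : (A - B - C) * n11 + 2%:R * (B - A - C) * n12 + 2%:R * (C - A - B) * n13 + 4%:R * A * n23 = 0 by lra.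
have [k1 [k2 [k3 [hk [e1 [e2 e3]]]]]] := @alg R A B C n11 n22 n33 n12 n13 n23 c23 c13 c12 hD E1 E2 E3 E4 E5 E6.
by exists k1, k2, k3.
Qed.

End M.

Set Implicit Arguments. Unset Strict Implicit. Unset Printing Implicit Defensive.

Section V.
Variable R : realType.
Local Notation vec := (R * R * R)%type.
Local Notation vlin2 := (@vlin2 R).
Local Notation vlin3 := (@vlin3 R).

Definition cross (v w : vec) : vec :=
  (v.1.2 * w.2 - v.2 * w.1.2, v.2 * w.1.1 - v.1.1 * w.2, v.1.1 * w.1.2 - v.1.2 * w.1.1).
Definition dot (v w : vec) : R := v.1.1 * w.1.1 + v.1.2 * w.1.2 + v.2 * w.2.
Definition det3 (u v w : vec) : R := dot (cross u v) w.
Definition indep (v w : vec) : Prop :=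
  ~ [/\ (cross v w).1.1 = 0, (cross v w).1.2 = 0 & (cross v w).2 = 0].

Lemma indep_sym v w : indep v w -> indep w v.
Proof.
move=> h [h1 h2 h3]; apply: h; split; move: h1 h2 h3; rewrite /cross /= => h1 h2 h3; lra.
Qed.

Lemma indep_comb v w a b : indep v w -> vlin2 a b v w = (0, 0, 0) -> a = 0 /\ b = 0.
Proof.
move=> hi [e1 e2 e3].
have ha : forall c : R, (a * c = 0) -> c = 0 \/ a = 0.
  by move=> c /eqP; rewrite mulf_eq0 => /orP [/eqP ->|/eqP ->]; [right|left].
have hb : forall c : R, (b * c = 0) -> c = 0 \/ b = 0.
  by move=> c /eqP; rewrite mulf_eq0 => /orP [/eqP ->|/eqP ->]; [right|left].
set c1 := (cross v w).1.1; set c2 := (cross v w).1.2; set c3 := (cross v w).2.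
have a1 : a * c1 = (a * v.1.2 + b * w.1.2) * w.2 - (a * v.2 + b * w.2) * w.1.2 by rewrite /c1 /=; ring.
have a2 : a * c2 = (a * v.2 + b * w.2) * w.1.1 - (a * v.1.1 + b * w.1.1) * w.2 by rewrite /c2 /=; ring.
have a3 : a * c3 = (a * v.1.1 + b * w.1.1) * w.1.2 - (a * v.1.2 + b * w.1.2) * w.1.1 by rewrite /c3 /=; ring.
have b1 : b * c1 = - ((a * v.1.2 + b * w.1.2) * v.2 - (a * v.2 + b * w.2) * v.1.2) by rewrite /c1 /=; ring.
have b2 : b * c2 = - ((a * v.2 + b * w.2) * v.1.1 - (a * v.1.1 + b * w.1.1) * v.2) by rewrite /c2 /=; ring.
have b3 : b * c3 = - ((a * v.1.1 + b * w.1.1) * v.1.2 - (a * v.1.2 + b * w.1.2) * v.1.1) by rewrite /c3 /=; ring.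
rewrite e1 e2 e3 !mul0r subrr ?oppr0 in a1 a2 a3 b1 b2 b3.
split.
  case: (ha _ a1) => // h1; case: (ha _ a2) => // h2; case: (ha _ a3) => // h3.
  by exfalso; apply: hi; split.
case: (hb _ b1) => // h1; case: (hb _ b2) => // h2; case: (hb _ b3) => // h3.
by exfalso; apply: hi; split.
Qed.

Lemma lin_nonzero v w t : indep v w -> nonzero3 (vlin2 1 t v w).
Proof. by move=> hi h; have [] := indep_comb hi h; move=> /eqP; rewrite oner_eq0. Qed.

Lemma uniq_t v w w' t1 t2 : indep v w -> proj_eq (vlin2 1 t1 v w) w' ->
  proj_eq (vlin2 1 t2 v w) w' -> t1 = t2.
Proof.
move=> hi [l1 [l10 [e1 e2 e3]]] [l2 [l20 [f1 f2 f3]]].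
have h : vlin2 (l2 - l1) (l2 * t1 - l1 * t2) v w = (0, 0, 0).
  rewrite /vlin2; congr (_, _, _).
  - have : l2 * (1 * v.1.1 + t1 * w.1.1) - l1 * (1 * v.1.1 + t2 * w.1.1) = 0 by rewrite e1 f1; ring.
    by move=> <-; ring.
  - have : l2 * (1 * v.1.2 + t1 * w.1.2) - l1 * (1 * v.1.2 + t2 * w.1.2) = 0 by rewrite e2 f2; ring.
    by move=> <-; ring.
  - have : l2 * (1 * v.2 + t1 * w.2) - l1 * (1 * v.2 + t2 * w.2) = 0 by rewrite e3 f3; ring.
    by move=> <-; ring.
have [h1 h2] := indep_comb hi h.
have hl : l2 = l1 by lra.
rewrite hl in h2.
have : l1 * (t1 - t2) = 0 by rewrite -h2; ring.
by move/eqP; rewrite mulf_eq0 (negbTE l10) /= subr_eq0 => /eqP.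
Qed.

End V.

Section W.
Variable R : realType.
Local Notation vec := (R * R * R)%type.
Local Notation qp := (@qp R).
Local Notation vlin2 := (@vlin2 R).
Local Notation vlin3 := (@vlin3 R).

Definition Kf (x y : vec) : R := 2%:R * x.1.1 * y.2 + 2%:R * x.2 * y.1.1 - 4%:R * x.1.2 * y.1.2.

Lemma REL (u1 u2 u3 : vec) :
  let w1 := cross u2 u3 in let w2 := cross u3 u1 in let w3 := cross u1 u2 in
  (Kf w1 w1)%:P * qp u1 ^+ 2 + (Kf w2 w2)%:P * qp u2 ^+ 2 + (Kf w3 w3)%:P * qp u3 ^+ 2
  + (2%:R * Kf w1 w2)%:P * (qp u1 * qp u2) + (2%:R * Kf w1 w3)%:P * (qp u1 * qp u3)
  + (2%:R * Kf w2 w3)%:P * (qp u2 * qp u3) = 0.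
Proof.
case: u1 => [[a1 b1] c1]; case: u2 => [[a2 b2] c2]; case: u3 => [[a3 b3] c3].
rewrite /= /Kf /cross /qp /= -!mul_polyC.
rewrite !(polyCD, polyCM, polyCN, polyCB, polyC_natr).
ring.
Qed.

Lemma final_contra (u1 u2 u3 : vec) (k1 k2 k3 : R) :
  let w1 := cross u2 u3 in let w2 := cross u3 u1 in let w3 := cross u1 u2 in
  det3 u1 u2 u3 != 0 -> (k1 != 0 \/ k2 != 0 \/ k3 != 0) ->
  Kf w1 w1 * k1 + Kf w1 w2 * k2 + Kf w1 w3 * k3 = 0 ->
  Kf w1 w2 * k1 + Kf w2 w2 * k2 + Kf w2 w3 * k3 = 0 ->
  Kf w1 w3 * k1 + Kf w2 w3 * k2 + Kf w3 w3 * k3 = 0 -> False.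
Proof.
case: u1 => [[a1 b1] c1]; case: u2 => [[a2 b2] c2]; case: u3 => [[a3 b3] c3].
move=> w1 w2 w3; set D := det3 _ _ _ => hD hk e1 e2 e3.
pose y1 := k1 * (b2 * c3 - c2 * b3) + k2 * (b3 * c1 - c3 * b1) + k3 * (b1 * c2 - c1 * b2).
pose y2 := k1 * (c2 * a3 - a2 * c3) + k2 * (c3 * a1 - a3 * c1) + k3 * (c1 * a2 - a1 * c2).
pose y3 := k1 * (a2 * b3 - b2 * a3) + k2 * (a3 * b1 - b3 * a1) + k3 * (a1 * b2 - b1 * a2).
have z0 : forall t, D * t = 0 -> t = 0.
  by move=> t /eqP; rewrite mulf_eq0 (negbTE hD) /= => /eqP.
have hy3 : y3 = 0.
  apply: z0; have : D * (2%:R * y3) = 0.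
    have -> : D * (2%:R * y3) = a1 * (Kf w1 w1 * k1 + Kf w1 w2 * k2 + Kf w1 w3 * k3)
      + a2 * (Kf w1 w2 * k1 + Kf w2 w2 * k2 + Kf w2 w3 * k3)
      + a3 * (Kf w1 w3 * k1 + Kf w2 w3 * k2 + Kf w3 w3 * k3) by rewrite /y3 /D /w1 /w2 /w3 /det3 /dot /Kf /cross /=; ring.
    by rewrite e1 e2 e3 !mulr0 !addr0.
  by move/eqP; rewrite mulrCA mulf_eq0 pnatr_eq0 /= => /eqP.
have hy2 : y2 = 0.
  apply: z0; have : D * (-4%:R * y2) = 0.
    have -> : D * (-4%:R * y2) = b1 * (Kf w1 w1 * k1 + Kf w1 w2 * k2 + Kf w1 w3 * k3)
      + b2 * (Kf w1 w2 * k1 + Kf w2 w2 * k2 + Kf w2 w3 * k3)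
      + b3 * (Kf w1 w3 * k1 + Kf w2 w3 * k2 + Kf w3 w3 * k3) by rewrite /y2 /D /w1 /w2 /w3 /det3 /dot /Kf /cross /=; ring.
    by rewrite e1 e2 e3 !mulr0 !addr0.
  by move/eqP; rewrite mulrCA mulf_eq0 oppr_eq0 pnatr_eq0 /= => /eqP.
have hy1 : y1 = 0.
  apply: z0; have : D * (2%:R * y1) = 0.
    have -> : D * (2%:R * y1) = c1 * (Kf w1 w1 * k1 + Kf w1 w2 * k2 + Kf w1 w3 * k3)
      + c2 * (Kf w1 w2 * k1 + Kf w2 w2 * k2 + Kf w2 w3 * k3)
      + c3 * (Kf w1 w3 * k1 + Kf w2 w3 * k2 + Kf w3 w3 * k3) by rewrite /y1 /D /w1 /w2 /w3 /det3 /dot /Kf /cross /=; ring.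
    by rewrite e1 e2 e3 !mulr0 !addr0.
  by move/eqP; rewrite mulrCA mulf_eq0 pnatr_eq0 /= => /eqP.
have hk1 : k1 = 0.
  apply: z0; rewrite -[RHS](_ : a1 * y1 + b1 * y2 + c1 * y3 = 0); last by rewrite hy1 hy2 hy3; ring.
  by rewrite /y1 /y2 /y3 /D /det3 /dot /cross /=; ring.
have hk2 : k2 = 0.
  apply: z0; rewrite -[RHS](_ : a2 * y1 + b2 * y2 + c2 * y3 = 0); last by rewrite hy1 hy2 hy3; ring.
  by rewrite /y1 /y2 /y3 /D /det3 /dot /cross /=; ring.
have hk3 : k3 = 0.
  apply: z0; rewrite -[RHS](_ : a3 * y1 + b3 * y2 + c3 * y3 = 0); last by rewrite hy1 hy2 hy3; ring.
  by rewrite /y1 /y2 /y3 /D /det3 /dot /cross /=; ring.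
by move: hk; rewrite hk1 hk2 hk3 eqxx => -[//|[//|//]].
Qed.

End W.

Section X.
Variable R : realType.
Variable L : 'I_9 -> R.
Hypothesis HL : in_dual_cone L.
Local Notation vec := (R * R * R)%type.
Local Notation ell := (@ell R L).
Local Notation qp := (@qp R).
Local Notation vlin2 := (@vlin2 R).
Local Notation vlin3 := (@vlin3 R).

Lemma LineInf (s : seq vec) v w : zeros_covered_by L s -> indep v w ->
  (forall t, ell (qp (vlin2 1 t v w) ^+ 4) = 0) -> False.
Proof.
move=> hs hi hz.
have key : forall s : seq vec, exists B : R, forall t, B < t ->
    forall w', w' \in s -> ~ proj_eq (vlin2 1 t v w) w'.
  elim=> [|w' s' [B IH]]; first by exists 0.
  case: (classic (exists t0, proj_eq (vlin2 1 t0 v w) w')) => [[t0 h0]|hn].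
    exists (`|B| + `|t0|) => t ht w''; rewrite inE => /orP [/eqP ->|hin].
      move=> h; have tt0 := uniq_t hi h h0; move: ht; rewrite tt0.
      have := ler_norm t0; have := normr_ge0 B; lra.
    apply: IH => //; have := ler_norm B; have := normr_ge0 t0; lra.
  exists B => t ht w''; rewrite inE => /orP [/eqP -> h|hin]; first by apply: hn; exists t.
  exact: IH.
have [B HB] := key s.
have hz' : real_zero L (vlin2 1 (B + 1) v w) := @ell_zero R L _ (lin_nonzero (t:=B + 1) hi) (hz _).
have [w' win hp] := hs _ hz'.
by apply: (HB (B + 1) _ w' win hp); lra.
Qed.

Lemma PairPos (s : seq vec) z w : zeros_covered_by L s -> ell (qp z ^+ 4) = 0 ->
  ell (qp w ^+ 4) = 0 -> indep z w -> 0 < ell (qp z ^+ 2 * qp w ^+ 2).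
Proof.
move=> hs hz hw hi.
have c0 : 0 <= ell (qp z ^+ 2 * qp w ^+ 2).
  have := @posq R L HL (vlin2 1 1 z w).
  rewrite qp_lin2 (@pair_exp R L HL z w 1 1 hz hw) !expr1n !mulr1.
  have : (0 : R) < 6%:R by rewrite ltr0n.
  nra.
rewrite lt_neqAle c0 andbT; apply/negP => /eqP c00.
apply: (LineInf hs hi) => t.
by rewrite qp_lin2 (@pair_exp R L HL z w 1 t hz hw) -c00 mulr0.
Qed.

Lemma Coll (s : seq vec) z w x a b : zeros_covered_by L s -> ell (qp z ^+ 4) = 0 ->
  ell (qp w ^+ 4) = 0 -> ell (qp x ^+ 4) = 0 -> indep z w ->
  x = vlin2 a b z w -> a != 0 -> b != 0 -> False.
Proof.
move=> hs hz hw hx hi hxe ha hb.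
have hc := PairPos hs hz hw hi.
move: hx; rewrite hxe qp_lin2 (@pair_exp R L HL z w a b hz hw) => /eqP.
rewrite !mulf_eq0 pnatr_eq0 ?expf_eq0 /= (negbTE ha) (negbTE hb) /= => /eqP c0.
by move: hc; rewrite c0 ltxx.
Qed.


Lemma mul0_r (x f : R) : f != 0 -> x * f = 0 -> x = 0.
Proof. by move=> f0 /eqP; rewrite mulf_eq0 (negbTE f0) orbF => /eqP. Qed.

Lemma nprop_indep (v w : vec) : nonzero3 v -> nonzero3 w -> ~ proj_eq v w -> indep v w.
Proof.
case: v => [[a b] c]; case: w => [[d e] f] hv hw hp [c1 c2 c3]; apply: hp.
rewrite /cross /= in c1 c2 c3.
have [d0|d0] := eqVneq d 0.
  have [e0|e0] := eqVneq e 0.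
    have f0 : f != 0 by apply/eqP => f0; apply: hw; rewrite d0 e0 f0.
    have a0 : a = 0 by apply: (mul0_r f0); move: c2; rewrite d0; lra.
    have b0 : b = 0 by apply: (mul0_r f0); move: c1; rewrite e0; lra.
    exists (c / f); split.
      rewrite mulf_neq0 ?invr_neq0 //; apply/eqP => c0; apply: hv; by rewrite a0 b0 c0.
    by rewrite /= d0 e0 a0 b0 !mulr0 divfK.
  have a0 : a = 0 by apply: (mul0_r e0); move: c3; rewrite d0; lra.
  exists (b / e); split.
    rewrite mulf_neq0 ?invr_neq0 //; apply/eqP => b0; apply: hv.
    have c0 : c = 0 by apply: (mul0_r e0); move: c1; rewrite b0; lra.
    by rewrite a0 b0 c0.
  rewrite /= d0 a0 mulr0 divfK //; congr (_, _, _).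
  by rewrite -[LHS](mulfK e0) (_ : c * e = b * f) 1?mulrAC //; lra.
exists (a / d); split.
  rewrite mulf_neq0 ?invr_neq0 //; apply/eqP => a0; apply: hv.
  have b0 : b = 0 by apply: (mul0_r d0); move: c3; rewrite a0; lra.
  have c0 : c = 0 by apply: (mul0_r d0); move: c2; rewrite a0; lra.
  by rewrite a0 b0 c0.
rewrite /= divfK //; congr (_, _, _).
  by rewrite -[LHS](mulfK d0) (_ : b * d = a * e) 1?mulrAC //; lra.
by rewrite -[LHS](mulfK d0) (_ : c * d = a * f) 1?mulrAC //; lra.
Qed.

Lemma sos3 (a b c : R) : a * a + b * b + c * c = 0 -> [/\ a = 0, b = 0 & c = 0].
Proof.
move=> h; rewrite -!expr2 in h.
have := sqr_ge0 a; have := sqr_ge0 b; have := sqr_ge0 c => hc hb ha.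
have h1 : a ^+ 2 = 0 by lra.
have h2 : b ^+ 2 = 0 by lra.
have h3 : c ^+ 2 = 0 by lra.
by split; apply/eqP; rewrite -sqrf_eq0; apply/eqP.
Qed.

Lemma div_comb (N P Q z x y : R) : N != 0 -> N * z = P * x + Q * y -> z = P / N * x + Q / N * y.
Proof. by move=> hN h; apply: (mulIf hN); rewrite [LHS]mulrC h; field. Qed.

Lemma triple_id (x y z : vec) :
  dot (cross x y) (cross x y) * z.1.1 = dot (cross z y) (cross x y) * x.1.1
     + dot (cross x z) (cross x y) * y.1.1 + det3 x y z * (cross x y).1.1 /\
  dot (cross x y) (cross x y) * z.1.2 = dot (cross z y) (cross x y) * x.1.2
     + dot (cross x z) (cross x y) * y.1.2 + det3 x y z * (cross x y).1.2 /\
  dot (cross x y) (cross x y) * z.2 = dot (cross z y) (cross x y) * x.2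
     + dot (cross x z) (cross x y) * y.2 + det3 x y z * (cross x y).2.
Proof.
case: x => [[x1 x2] x3]; case: y => [[y1 y2] y3]; case: z => [[z1 z2] z3].
rewrite /det3 /dot /cross /=; split; [ring|split; ring].
Qed.

Lemma tri_indep (s : seq vec) x y z : zeros_covered_by L s -> ell (qp x ^+ 4) = 0 ->
  ell (qp y ^+ 4) = 0 -> ell (qp z ^+ 4) = 0 ->
  indep x y -> indep x z -> indep y z -> det3 x y z != 0.
Proof.
move=> hs hx hy hz ixy ixz iyz; apply/negP => /eqP hd.
have hN : dot (cross x y) (cross x y) != 0.
  apply/negP => /eqP hN; apply: ixy.
  move: hN; rewrite /dot; set n1 := (cross x y).1.1; set n2 := (cross x y).1.2; set n3 := (cross x y).2.
  by move=> hN; apply: sos3.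
set N := dot (cross x y) (cross x y) in hN.
pose a := dot (cross z y) (cross x y) / N.
pose b := dot (cross x z) (cross x y) / N.
have hzab : z = vlin2 a b x y.
  have [i1 [i2 i3]] := triple_id x y z.
  rewrite hd !mul0r !addr0 in i1 i2 i3.
  have -> : z = (z.1.1, z.1.2, z.2) by case: (z) => [[]].
  by rewrite /vlin2 /a /b; congr (_, _, _); apply: div_comb hN _.
have [a0|a0] := eqVneq a 0.
  apply: iyz; rewrite hzab a0 /cross /=; split; ring.
have [b0|b0] := eqVneq b 0.
  apply: ixz; rewrite hzab b0 /cross /=; split; ring.
exact: (Coll hs hx hy hz ixy hzab a0 b0).
Qed.

Lemma cramer (v1 v2 v3 v4 : vec) :
  det3 v1 v2 v3 * v4.1.1 = det3 v4 v2 v3 * v1.1.1 + det3 v1 v4 v3 * v2.1.1 + det3 v1 v2 v4 * v3.1.1 /\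
  det3 v1 v2 v3 * v4.1.2 = det3 v4 v2 v3 * v1.1.2 + det3 v1 v4 v3 * v2.1.2 + det3 v1 v2 v4 * v3.1.2 /\
  det3 v1 v2 v3 * v4.2 = det3 v4 v2 v3 * v1.2 + det3 v1 v4 v3 * v2.2 + det3 v1 v2 v4 * v3.2.
Proof.
case: v1 => [[x1 x2] x3]; case: v2 => [[y1 y2] y3]; case: v3 => [[z1 z2] z3];
case: v4 => [[w1 w2] w3].
rewrite /det3 /dot /cross /=; split; [ring|split; ring].
Qed.

Lemma div_comb3 (N P Q S z x y w : R) : N != 0 -> N * z = P * x + Q * y + S * w ->
  z = P / N * x + Q / N * y + S / N * w.
Proof. by move=> hN h; apply: (mulIf hN); rewrite [LHS]mulrC h; field. Qed.

Lemma qp_scale (a : R) v : qp (a * v.1.1, a * v.1.2, a * v.2) = a%:P * qp v.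
Proof. by rewrite /qp /= -!mul_polyC !polyCM; ring. Qed.

Lemma sc4 (a : R) p : ell ((a%:P * p) ^+ 4) = a ^+ 4 * ell (p ^+ 4).
Proof. by rewrite exprMn -polyC_exp ellCM. Qed.
Lemma sc31 (a b : R) p q : ell ((a%:P * p) ^+ 3 * (b%:P * q)) = a ^+ 3 * b * ell (p ^+ 3 * q).
Proof.
have -> : (a%:P * p) ^+ 3 * (b%:P * q) = (a ^+ 3 * b)%:P * (p ^+ 3 * q).
  by rewrite polyCM polyC_exp; ring.
by rewrite ellCM.
Qed.
Lemma sc22 (a b : R) p q : ell ((a%:P * p) ^+ 2 * (b%:P * q) ^+ 2) = a ^+ 2 * b ^+ 2 * ell (p ^+ 2 * q ^+ 2).
Proof.
have -> : (a%:P * p) ^+ 2 * (b%:P * q) ^+ 2 = (a ^+ 2 * b ^+ 2)%:P * (p ^+ 2 * q ^+ 2).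
  by rewrite polyCM !polyC_exp; ring.
by rewrite ellCM.
Qed.
Lemma sc1 (a : R) p q : ell (p * (a%:P * q)) = a * ell (p * q).
Proof. by rewrite mulrCA ellCM. Qed.

Lemma sqr_pos (a : R) : a != 0 -> 0 < a ^+ 2.
Proof. by move=> a0; rewrite lt_def sqr_ge0 andbT expf_neq0. Qed.

Lemma ML (s : seq vec) v1 v2 v3 v4 : zeros_covered_by L s ->
  real_zero L v1 -> real_zero L v2 -> real_zero L v3 -> real_zero L v4 ->
  indep v1 v2 -> indep v1 v3 -> indep v1 v4 -> indep v2 v3 -> indep v2 v4 -> indep v3 v4 -> False.
Proof.
move=> hs /(@zero_ell R L _) h1 /(@zero_ell R L _) h2 /(@zero_ell R L _) h3 /(@zero_ell R L _) h4.
move=> i12 i13 i14 i23 i24 i34.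
have hD := tri_indep hs h1 h2 h3 i12 i13 i23.
have hA := tri_indep hs h4 h2 h3 (indep_sym i24) (indep_sym i34) i23.
have hB := tri_indep hs h1 h4 h3 i14 i13 (indep_sym i34).
have hC := tri_indep hs h1 h2 h4 i12 i14 i24.
pose D := det3 v1 v2 v3.
pose a := det3 v4 v2 v3 / D; pose b := det3 v1 v4 v3 / D; pose c := det3 v1 v2 v4 / D.
have a0 : a != 0 by rewrite mulf_neq0 ?invr_neq0.
have b0 : b != 0 by rewrite mulf_neq0 ?invr_neq0.
have c0 : c != 0 by rewrite mulf_neq0 ?invr_neq0.
have hv4 : v4 = vlin3 a b c v1 v2 v3.
  have [e1 [e2 e3]] := cramer v1 v2 v3 v4.
  have -> : v4 = (v4.1.1, v4.1.2, v4.2) by case: (v4) => [[]].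
  by rewrite /vlin3 /a /b /c; congr (_, _, _); apply: div_comb3 hD _.
pose u1 : vec := (a * v1.1.1, a * v1.1.2, a * v1.2).
pose u2 : vec := (b * v2.1.1, b * v2.1.2, b * v2.2).
pose u3 : vec := (c * v3.1.1, c * v3.1.2, c * v3.2).
have q1 : qp u1 = a%:P * qp v1 := qp_scale a v1.
have q2 : qp u2 = b%:P * qp v2 := qp_scale b v2.
have q3 : qp u3 = c%:P * qp v3 := qp_scale c v3.
have q4 : qp u1 + qp u2 + qp u3 = qp v4 by rewrite hv4 qp_lin3 q1 q2 q3.
have FOv := @FO R L HL.
have hdet : det3 u1 u2 u3 != 0.
  have -> : det3 u1 u2 u3 = a * b * c * D by rewrite /u1 /u2 /u3 /D /det3 /dot /cross /=; ring.
  by rewrite (mulf_neq0 (mulf_neq0 (mulf_neq0 a0 b0) c0) hD).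
have := REL u1 u2 u3 => /= hrel.
have hpos : forall s' t' u' : R,
    0 <= ell ((s'%:P * qp u1 + t'%:P * qp u2 + u'%:P * qp u3) ^+ 4).
  move=> s' t' u'; have := @posq R L HL (vlin3 (s' * a) (t' * b) (u' * c) v1 v2 v3).
  by rewrite qp_lin3 q1 q2 q3 !polyCM !mulrA.
have c12 : 0 < ell (qp u1 ^+ 2 * qp u2 ^+ 2).
  rewrite q1 q2 sc22; apply: mulr_gt0; [apply: mulr_gt0; exact: sqr_pos|exact: PairPos hs h1 h2 i12].
have c13 : 0 < ell (qp u1 ^+ 2 * qp u3 ^+ 2).
  rewrite q1 q3 sc22; apply: mulr_gt0; [apply: mulr_gt0; exact: sqr_pos|exact: PairPos hs h1 h3 i13].
have c23 : 0 < ell (qp u2 ^+ 2 * qp u3 ^+ 2).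
  rewrite q2 q3 sc22; apply: mulr_gt0; [apply: mulr_gt0; exact: sqr_pos|exact: PairPos hs h2 h3 i23].
have z1 : ell (qp u1 ^+ 4) = 0 by rewrite q1 sc4 h1 mulr0.
have z2 : ell (qp u2 ^+ 4) = 0 by rewrite q2 sc4 h2 mulr0.
have z3 : ell (qp u3 ^+ 4) = 0 by rewrite q3 sc4 h3 mulr0.
have f12 : ell (qp u1 ^+ 3 * qp u2) = 0 by rewrite q1 q2 sc31 FOv ?mulr0.
have f13 : ell (qp u1 ^+ 3 * qp u3) = 0 by rewrite q1 q3 sc31 FOv ?mulr0.
have f21 : ell (qp u2 ^+ 3 * qp u1) = 0 by rewrite q2 q1 sc31 FOv ?mulr0.
have f23 : ell (qp u2 ^+ 3 * qp u3) = 0 by rewrite q2 q3 sc31 FOv ?mulr0.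
have f31 : ell (qp u3 ^+ 3 * qp u1) = 0 by rewrite q3 q1 sc31 FOv ?mulr0.
have f32 : ell (qp u3 ^+ 3 * qp u2) = 0 by rewrite q3 q2 sc31 FOv ?mulr0.
have g1 : ell ((qp u1 + qp u2 + qp u3) ^+ 3 * qp u1) = 0 by rewrite q4 q1 sc1 FOv ?mulr0.
have g2 : ell ((qp u1 + qp u2 + qp u3) ^+ 3 * qp u2) = 0 by rewrite q4 q2 sc1 FOv ?mulr0.
have g3 : ell ((qp u1 + qp u2 + qp u3) ^+ 3 * qp u3) = 0 by rewrite q4 q3 sc1 FOv ?mulr0.
have [k1 [k2 [k3 [hk [e1 [e2 e3]]]]]] := @core R L (qp u1) (qp u2) (qp u3)
  (Kf (cross u2 u3) (cross u2 u3)) (Kf (cross u3 u1) (cross u3 u1)) (Kf (cross u1 u2) (cross u1 u2))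
  (Kf (cross u2 u3) (cross u3 u1)) (Kf (cross u2 u3) (cross u1 u2)) (Kf (cross u3 u1) (cross u1 u2))
  z1 z2 z3 f12 f13 f21 f23 f31 f32 g1 g2 g3 hpos c12 c13 c23 hrel.
exact: (final_contra hdet hk e1 e2 e3).
Qed.

End X.

Lemma proj_sym (R : realType) (v w : R * R * R) : proj_eq v w -> proj_eq w v.
Proof.
case: w => [[d e] f] [t [t0 ->]]; exists t^-1; split; first by rewrite invr_eq0.
by rewrite /= !mulrA mulVf // !mul1r.
Qed.

Unset Implicit Arguments.

Theorem mainTheorem12 (R : realType) (L : 'I_9 -> R) :
  in_dual_cone L ->
  (exists s : seq (R * R * R), zeros_covered_by L s) ->
  exists s : seq (R * R * R), (size s <= 3)%N /\ zeros_covered_by L s.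
Proof.
move=> HL [s hs].
have ind : forall v w, real_zero L v -> real_zero L w -> ~ proj_eq v w -> indep v w.
  by move=> v w [hv _] [hw _] hp; apply: nprop_indep.
have ind' : forall v w, real_zero L v -> real_zero L w -> ~ proj_eq w v -> indep v w.
  by move=> v w hv hw hp; apply: ind => // h; apply: hp; apply: proj_sym.
case: (classic (exists v1, real_zero L v1)) => [[v1 z1]|n1]; last first.
  by exists [::]; split => // v hv; exfalso; apply: n1; exists v.
case: (classic (exists v2, real_zero L v2 /\ ~ proj_eq v2 v1)) => [[v2 [z2 p21]]|n2]; last first.
  exists [:: v1]; split => // v hv; exists v1; first by rewrite inE.
  by apply: NNPP => hp; apply: n2; exists v.
case: (classic (exists v3, real_zero L v3 /\ ~ proj_eq v3 v1 /\ ~ proj_eq v3 v2))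
  => [[v3 [z3 [p31 p32]]]|n3]; last first.
  exists [:: v1; v2]; split => // v hv.
  case: (classic (proj_eq v v1)) => h1; first by exists v1; rewrite ?inE ?eqxx.
  exists v2; first by rewrite !inE eqxx orbT.
  by apply: NNPP => h2; apply: n3; exists v.
case: (classic (exists v4, real_zero L v4 /\ ~ proj_eq v4 v1 /\ ~ proj_eq v4 v2 /\ ~ proj_eq v4 v3))
  => [[v4 [z4 [p41 [p42 p43]]]]|n4]; last first.
  exists [:: v1; v2; v3]; split => // v hv.
  case: (classic (proj_eq v v1)) => h1; first by exists v1; rewrite ?inE ?eqxx.
  case: (classic (proj_eq v v2)) => h2; first by exists v2 => //; rewrite !inE eqxx orbT.
  exists v3; first by rewrite !inE eqxx !orbT.
  by apply: NNPP => h3; apply: n4; exists v.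
exfalso; apply: (ML HL hs z1 z2 z3 z4 (ind' _ _ z1 z2 p21) (ind' _ _ z1 z3 p31) (ind' _ _ z1 z4 p41)
  (ind' _ _ z2 z3 p32) (ind' _ _ z2 z4 p42) (ind' _ _ z3 z4 p43)).
Qed.
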